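(* Let $k\ge1$ and $S_a,S_b\in\{0,1\}^{k^2}$. Let $G$ be the directed unweighted graph on vertices $\ell_i,\ell_i',r_i,r_i'$ ($1\le i\le k$) with edges $(\ell_i,r_i)$ and $(r_i',\ell_i')$ for each $i$, the edge $(\ell_j',\ell_i)$ whenever $S_a[(i-1)k+j]=1$, and the edge $(r_i,r_j')$ whenever $S_b[(i-1)k+j]=1$. If there is an index $m$ with $S_a[m]=S_b[m]=1$, then $G$ contains a directed cycle of length $4$; otherwise every directed cycle of $G$ has length at least $8$.
   Context: For a bit string $S$, $S[m]$ denotes its $m$-th bit. *)

(* Defs.v *)
From HB Require Import structures.
From mathcomp Require Import all_boot.
Set Implicit Arguments. Unset Strict Implicit. Unset Printing Implicit Defensive.

(* The four kinds of vertices: l_i, l'_i, r_i, r'_i. *)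
Inductive side := Lv | Lp | Rv | Rp.

Definition side_eqb (a b : side) : bool :=
  match a, b with
  | Lv, Lv | Lp, Lp | Rv, Rv | Rp, Rp => true
  | _, _ => false
  end.

Lemma side_eqP : Equality.axiom side_eqb.
Proof. by case; case; constructor. Qed.

HB.instance Definition _ := hasDecEq.Build side side_eqP.

(* Vertex (s, i) with i : 'I_k (0-based, i.e. paper's index i+1). *)
Definition vertex (k : nat) := (side * 'I_k)%type.

(* Bit strings S in {0,1}^(k^2) are seq bool of size k^2;
   the paper's S[m] (1-based) is  nth false S (m-1).
   Paper's index (i-1)k + j (1-based i,j) becomes i*k + j (0-based). *)
Definition G_edge (k : nat) (Sa Sb : seq bool) : rel (vertex k) :=
  fun u v =>
    match u.1, v.1 with
    | Lv, Rv => u.2 == v.2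
    | Rp, Lp => u.2 == v.2
    | Lp, Lv => nth false Sa (nat_of_ord v.2 * k + u.2) (* (l'_j, l_i) if Sa[(i-1)k+j] *)
    | Rv, Rp => nth false Sb (nat_of_ord u.2 * k + v.2) (* (r_i, r'_j) if Sb[(i-1)k+j] *)
    | _, _ => false
    end.

Definition dcycle (T : eqType) (e : rel T) (c : seq T) : bool :=
  [&& c != [::], uniq c & cycle e c].
Arguments G_edge : clear implicits.

(* Main.v *)
Require Import Defs.
From mathcomp Require Import all_boot.
From mathcomp Require Import zify.

Definition phase (s : side) : nat :=
  match s with Lv => 0 | Rv => 1 | Rp => 2 | Lp => 3 end.

Lemma phase_lt (s : side) : phase s < 4.
Proof. by case: s. Qed.

Lemma edge_phase k Sa Sb (u v : vertex k) :
  G_edge k Sa Sb u v -> phase v.1 = (phase u.1 + 1) %% 4.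
Proof. by case: u => [su iu]; case: v => [sv iv]; case: su; case: sv. Qed.

Lemma path_phase k Sa Sb (x : vertex k) s :
  path (G_edge k Sa Sb) x s -> phase (last x s).1 = (phase x.1 + size s) %% 4.
Proof.
elim: s x => [|y s IH] x /=.
  move=> _; rewrite addn0 modn_small //; exact: phase_lt.
move=> /andP [exy ps]; rewrite (IH _ ps) (@edge_phase _ _ _ _ _ exy).
have := phase_lt x.1; lia.
Qed.

Lemma bound k (i j : 'I_k) : i * k + j < k ^ 2.
Proof. have := ltn_ord i; have := ltn_ord j; nia. Qed.

Lemma contra k (Sa Sb : seq bool) (i j : 'I_k) :
  nth false Sa (i * k + j) -> nth false Sb (i * k + j) ->
  exists m, m < k ^ 2 /\ nth false Sa m /\ nth false Sb m.
Proof. by move=> a b; exists (i * k + j); split; [apply: bound|]. Qed.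

Theorem mainTheorem6 (k : nat) (Sa Sb : seq bool) :
  1 <= k -> size Sa = k ^ 2 -> size Sb = k ^ 2 ->
  ((exists m, m < k ^ 2 /\ nth false Sa m /\ nth false Sb m) ->
     exists c : seq (vertex k), dcycle (G_edge k Sa Sb) c /\ size c = 4)
  /\
  (~ (exists m, m < k ^ 2 /\ nth false Sa m /\ nth false Sb m) ->
     forall c : seq (vertex k), dcycle (G_edge k Sa Sb) c -> 8 <= size c).
Proof.
move=> k1 hSa hSb; split.
  move=> [m [mlt [ha hb]]].
  have jlt : m %% k < k by rewrite ltn_mod; lia.
  have ilt : m %/ k < k by rewrite ltn_divLR; [nia|lia].
  pose i := Ordinal ilt; pose j := Ordinal jlt.
  have em : m = i * k + j by rewrite /= -divn_eq.
  exists [:: (Lv, i); (Rv, i); (Rp, j); (Lp, j)]; split => //.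
  rewrite /dcycle /= /G_edge /= !eqxx /= -em ha hb.
  by rewrite !andbT.
move=> H c /and3P [cn _ cc].
case: c cn cc => [|x s] // _ cc.
have hp := @path_phase _ _ _ _ _ cc.
rewrite last_rcons size_rcons in hp.
have h4 : 4 %| (size s).+1 by have := phase_lt x.1; move: hp; lia.
have : (size s).+1 != 4.
  apply/negP => /eqP [] /=.
  case: s cc {hp h4} => [|b [|c0 [|d [|? ?]]]] //= cc _.
  move: cc; case: x => [sa ia]; case: b => [sb ib]; case: c0 => [sc ic];
  case: d => [sd id]; rewrite /G_edge /=.
  case: sa; case: sb => //; case: sc => //; case: sd => //=; rewrite ?andbF ?andbT => // /and4P [e1 e2 e3 e4];
  move: e1 e2 e3 e4.
  1-4: move=> e1 e2 e3 e4;
    repeat match goal with h : is_true (?a == ?b) |- _ => move/eqP: h => h; subst end.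
  1-4: by apply: H; apply: contra; eassumption.
move: h4 => /=; lia.
Qed.
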